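(* Fix $r\in(0,\pi/2)$ and let $s(\ell)=\sin^3\ell$, $s^{(-1)}$ its primitive vanishing at $0$ and $s^{(-2)}$ the primitive of $s^{(-1)}$ vanishing at $0$. Define, for $\ell\in[0,\pi)$ and $\alpha,\beta\in[0,\pi/2)$, \[g(\ell,\alpha,\beta) =\frac43 \ell - \frac{s(\ell)}{9\tan^2r \cos\alpha\cos\beta} -\frac{s^{(-1)}(\ell)}{3\tan r}\left(\frac1{\cos\alpha}+\frac1{\cos\beta}\right)-s^{(-2)}(\ell),\] and $f(\alpha,\beta)=\sup_\ell g(\ell,\alpha,\beta)$. Then: (1) for each fixed $\alpha$, the maximum of $\ell\mapsto g(\ell,\alpha,\alpha)$ is attained at $\ell=2\arctan(\tan r\cos\alpha)$ and only there; (2) for all $\alpha,\beta$, $f(\alpha,\beta)\le \frac12\left(f(\alpha,\alpha)+f(\beta,\beta)\right)$, with equality only for $\alpha=\beta$. *)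

(* Defs.v *)
From Stdlib Require Import Reals Lra.
From Coquelicot Require Import Coquelicot.
Open Scope R_scope.

Definition s (l : R) : R := (sin l) ^ 3.

Definition s1 (l : R) : R := RInt s 0 l.

Definition s2 (l : R) : R := RInt s1 0 l.

Definition gfun (r l a b : R) : R :=
  4 / 3 * l
  - s l / (9 * (tan r) ^ 2 * cos a * cos b)
  - s1 l / (3 * tan r) * (1 / cos a + 1 / cos b)
  - s2 l.

Definition fsup (r a b : R) : R :=
  real (Lub_Rbar (fun y => exists l, 0 <= l < PI /\ y = gfun r l a b)).

(* Main.v *)
Require Import Defs.
From Stdlib Require Import Reals Lra Nsatz.
From Coquelicot Require Import Coquelicot.
Open Scope R_scope.

Definition s1c (l : R) : R := 2/3 - cos l + (cos l)^3/3.
Definition s2c (l : R) : R := 2*l/3 - 2/3 * sin l - (sin l)^3/9.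

Ltac trig y := let H := fresh in assert (H := sin2_cos2 y); unfold Rsqr in H; field_simplify_eq; [simpl; nsatz | ..]; repeat split; auto.

Lemma s1_eq l : s1 l = s1c l.
Proof.
  unfold s1.
  assert (H : is_RInt s 0 l (minus (s1c l) (s1c 0))).
  { apply (is_RInt_derive s1c s).
    - intros x _. unfold s1c, s. auto_derive; auto. trig x.
    - intros x _. unfold s. apply (ex_derive_continuous (fun y => sin y ^ 3)). auto_derive; auto. }
  rewrite (is_RInt_unique _ _ _ _ H).
  unfold minus, plus, opp; simpl. unfold s1c. rewrite cos_0. simpl. lra.
Qed.

Lemma s2_eq l : s2 l = s2c l.
Proof.
  unfold s2. rewrite (RInt_ext s1 s1c) by (intros; apply s1_eq).
  assert (H : is_RInt s1c 0 l (minus (s2c l) (s2c 0))).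
  { apply (is_RInt_derive s2c s1c).
    - intros x _. unfold s2c, s1c. auto_derive; auto. trig x.
    - intros x _. unfold s1c. apply (ex_derive_continuous (fun y => 2/3 - cos y + (cos y)^3/3)). auto_derive; auto. }
  rewrite (is_RInt_unique _ _ _ _ H).
  unfold minus, plus, opp; simpl. unfold s2c. rewrite sin_0. simpl. lra.
Qed.

Definition Gc u v l := 2*l/3 + 2/3*sin l + (1-u*v)*(sin l)^3/9 - (u+v)/3*s1c l.
Definition Gd u v l := 2/3 + 2/3*cos l + (1-u*v)*(sin l)^2*cos l/3 - (u+v)/3*(sin l)^3.

Lemma Gc_deriv u v l : derivable_pt_lim (Gc u v) l (Gd u v l).
Proof.
  apply is_derive_Reals. unfold Gc, Gd, s1c. auto_derive; auto. trig l.
Qed.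

Definition cot p := cos p / sin p.
Definition Wf p1 p2 l := cos (p1-p2) - cos(p1+p2-l) + sin l * sin(p1+p2-l).
Definition Wd p1 p2 l := - sin(p1+p2-l) + cos l * sin(p1+p2-l) - sin l * cos(p1+p2-l).

Lemma Wf_deriv p1 p2 l : derivable_pt_lim (Wf p1 p2) l (Wd p1 p2 l).
Proof.
  apply is_derive_Reals. unfold Wf, Wd. auto_derive; auto. unfold Rminus. ring.
Qed.

Lemma cosx_exp p1 p2 l : cos (p1+p2-l) = (cos p1 * cos p2 - sin p1 * sin p2) * cos l + (sin p1 * cos p2 + cos p1 * sin p2) * sin l.
Proof. rewrite cos_minus, cos_plus, sin_plus. ring. Qed.
Lemma sinx_exp p1 p2 l : sin (p1+p2-l) = (sin p1 * cos p2 + cos p1 * sin p2) * cos l - (cos p1 * cos p2 - sin p1 * sin p2) * sin l.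
Proof. rewrite sin_minus, cos_plus, sin_plus. ring. Qed.

Lemma GdW p1 p2 l : sin p1 <> 0 -> sin p2 <> 0 ->
  3 * sin p1 * sin p2 * Gd (cot p1) (cot p2) l = (1 + cos l) * Wf p1 p2 l.
Proof.
  intros h1 h2. unfold Gd, Wf, cot. rewrite cos_minus, cosx_exp, sinx_exp.
  trig l.
Qed.

Definition avg p1 p2 := 2/3*(p1+p2) + 2/9*(sin p1 * cos p1 + sin p2 * cos p2).

Lemma I3 p1 p2 L : sin p1 <> 0 -> sin p2 <> 0 -> cos (p1+p2-L) <> 0 -> Wf p1 p2 L = 0 ->
  9/2 * (avg p1 p2 - Gc (cot p1) (cot p2) L) =
  3 * (p1+p2-L) + (cos (p1+p2-L) - sin L * sin (p1+p2-L)) * sin (p1+p2)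
   - sin L - (1 - cos L) * (sin (p1+p2-L) / cos (p1+p2-L)).
Proof.
  intros h1 h2 h3 hW. unfold Wf in hW. unfold avg, Gc, cot, s1c.
  assert (E1 := cosx_exp p1 p2 L). assert (E2 := sinx_exp p1 p2 L).
  rewrite cos_minus in hW. rewrite sin_plus.
  set (cx := cos (p1+p2-L)) in *. set (sx := sin (p1+p2-L)) in *.
  assert (H1 := sin2_cos2 p1). assert (H2 := sin2_cos2 p2). assert (H3 := sin2_cos2 L).
  unfold Rsqr in *. field_simplify_eq; [simpl; nsatz | auto].
Qed.

Definition ff s c z := 3*z + (cos z - 2*s*c*sin z)*(2*s*c*cos z + (c*c - s*s)*sin z) - 2*s*c - 2*s*s*(sin z / cos z).
Definition fd s c z := 3 + (- sin z - 2*s*c*cos z)*(2*s*c*cos z + (c*c - s*s)*sin z)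
   + (cos z - 2*s*c*sin z)*(- 2*s*c*sin z + (c*c - s*s)*cos z) - 2*s*s/(cos z * cos z).

Lemma ff_deriv s c z : cos z <> 0 -> derivable_pt_lim (ff s c) z (fd s c z).
Proof.
  intro hz. apply is_derive_Reals. unfold ff, fd. auto_derive.
  - auto.
  - assert (H := sin2_cos2 z); unfold Rsqr in H. field_simplify_eq; [simpl; nsatz | auto].
Qed.

Lemma fd_pos s c z : 0 <= s -> 0 < c -> s*s + c*c = 1 -> 0 < cos z -> 0 <= sin z ->
  0 < c * cos z - s * sin z -> 0 < fd s c z.
Proof.
  intros hs hc hsc hcz hsz hA.
  assert (E : fd s c z * (cos z * cos z) = 4*c*c*(c*cos z - s*sin z)^2*(cos z * cos z)
     + 2*(sin z * sin z)*((c*cos z - s*sin z)*(c * cos z + s*sin z))).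
  { unfold fd. assert (H := sin2_cos2 z); unfold Rsqr in H. field_simplify_eq; [ | lra]. set (sz := sin z) in *. set (cz := cos z) in *. clear hA hsz hcz. simpl. nsatz. }
  assert (P : 0 < 4*c*c*(c*cos z - s*sin z)^2*(cos z * cos z)
     + 2*(sin z * sin z)*((c*cos z - s*sin z)*(c * cos z + s*sin z))).
  { assert (0 < c*cos z + s*sin z) by nra.
    assert (0 < 4*c*c*(c*cos z - s*sin z)^2*(cos z * cos z)).
    { repeat apply Rmult_lt_0_compat; try lra; apply pow_lt; lra. }
    assert (0 <= 2*(sin z * sin z)*((c*cos z - s*sin z)*(c * cos z + s*sin z))).
    { apply Rmult_le_pos. nra. nra. }
    lra. }
  rewrite <- E in P. assert (0 < cos z * cos z) by nra. nra.
Qed.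

Lemma ff_pos s c x : 0 <= s -> 0 < c -> s*s + c*c = 1 -> 0 < x < PI/2 -> s * sin x < c * cos x ->
  0 < ff s c x.
Proof.
  intros hs hc hsc hx hA.
  assert (PI2 := PI2_RGT_0).
  destruct (MVT_cor2 (ff s c) (fd s c) 0 x) as [z [Hz Hzb]]; [lra| |].
  - intros z Hz. apply ff_deriv. assert (0 < cos z) by (apply cos_gt_0; lra). lra.
  - assert (ff s c 0 = 0) by (unfold ff; rewrite sin_0, cos_0; field).
    assert (0 < fd s c z).
    { assert (0 < cos z) by (apply cos_gt_0; lra).
      assert (0 <= sin z) by (apply sin_ge_0; lra).
      apply fd_pos; auto.
      assert (cos x <= cos z) by (apply cos_decr_1; lra).
      assert (sin z <= sin x) by (apply sin_incr_1; lra).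
      nra. }
    nra.
Qed.

Lemma negx sA cA sB cB : 0 < sA -> 0 < sB -> sA*sA + cA*cA = 1 -> sB*sB+cB*cB = 1 ->
  cB < cA -> sA*cB + cA*sB >= sA -> cA + sB*sA <= 1 -> False.
Proof.
  intros h1 h2 h3 h4 h5 h6 h7.
  assert (hB : sB*(1+cA) <= sA).
  { assert (sB*sA*(1+cA) <= (1-cA)*(1+cA)) by (apply Rmult_le_compat_r; nra).
    nra. }
  destruct (Rle_lt_dec cA 0) as [hc|hc].
  - nra.
  - assert (1 - cB <= cA/(1+cA)).
    { apply Rmult_le_reg_r with (sA*(1+cA)). nra. field_simplify; nra. }
    assert (cB * (1+cA) >= 1).
    { apply Rmult_le_compat_r with (r := 1+cA) in H; [|lra]. field_simplify in H; nra. }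
    nra.
Qed.

Definition kf p := 4/3*p + 4/9*(sin p*cos p) + 8/9*(cos p/sin p) - 2*PI/3.
Definition kd p := 4/3 + 4/9*(cos p*cos p - sin p * sin p) - 8/9/(sin p * sin p).

Lemma kf_deriv p : sin p <> 0 -> derivable_pt_lim kf p (kd p).
Proof.
  intro h. apply is_derive_Reals. unfold kf, kd. auto_derive. auto.
  assert (H := sin2_cos2 p); unfold Rsqr in H. field_simplify_eq; [ | auto].
  set (a := sin p) in *. set (b := cos p) in *. simpl. nsatz.
Qed.

Lemma kpos p : 0 < p < PI/2 -> 0 < kf p.
Proof.
  intros hp. assert (PI2 := PI2_RGT_0).
  destruct (MVT_cor2 kf kd p (PI/2)) as [z [Hz Hzb]]; [lra| |].
  - intros z Hz. apply kf_deriv. assert (0 < sin z) by (apply sin_gt_0; lra). lra.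
  - assert (kf (PI/2) = 0) by (unfold kf; rewrite sin_PI2, cos_PI2; field).
    assert (kd z < 0).
    { assert (0 < sin z) by (apply sin_gt_0; lra).
      assert (0 < cos z) by (apply cos_gt_0; lra).
      assert (E : kd z * (sin z * sin z) = - 8/9 * (cos z*cos z)*(cos z * cos z)).
      { unfold kd. assert (HH := sin2_cos2 z); unfold Rsqr in HH. field_simplify_eq; [|lra].
        set (a := sin z) in *. set (b := cos z) in *. simpl. nsatz. }
      assert (0 < sin z * sin z) by nra.
      assert (0 < (cos z*cos z)*(cos z * cos z)) by (apply Rmult_lt_0_compat; nra).
      nra. }
    nra.
Qed.

Lemma Gc0 u v : Gc u v 0 = 0.
Proof. unfold Gc, s1c. rewrite sin_0, cos_0. field. Qed.

Lemma GcPI u v : Gc u v PI = 2*PI/3 - 4*(u+v)/9.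
Proof. unfold Gc, s1c. rewrite sin_PI, cos_PI. field. Qed.

Lemma half_facts L : 0 < L < PI ->
  sin L = 2 * sin (L/2) * cos (L/2) /\ cos L = cos (L/2) * cos (L/2) - sin (L/2) * sin (L/2)
  /\ 0 < sin (L/2) /\ 0 < cos (L/2).
Proof.
  intros hL. assert (PI2 := PI2_RGT_0).
  assert (E1 : sin L = sin (2*(L/2))) by (f_equal; field).
  assert (E2 : cos L = cos (2*(L/2))) by (f_equal; field).
  rewrite E1, E2, sin_2a, cos_2a. repeat split; try ring.
  apply sin_gt_0; lra. apply cos_gt_0; lra.
Qed.

Lemma main_max p1 p2 L : 0 < p1 < PI/2 -> 0 < p2 < PI/2 -> 0 <= L <= PI ->
  (forall z, 0 <= z <= PI -> Gc (cot p1) (cot p2) z <= Gc (cot p1) (cot p2) L) ->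
  Gc (cot p1) (cot p2) L <= avg p1 p2 /\
  (Gc (cot p1) (cot p2) L = avg p1 p2 -> p1 = p2 /\ L = p1 + p2).
Proof.
  intros hp1 hp2 hL Hmax. assert (PI2 := PI2_RGT_0).
  assert (S1 : 0 < sin p1) by (apply sin_gt_0; lra).
  assert (S2 : 0 < sin p2) by (apply sin_gt_0; lra).
  assert (C1 : 0 < cos p1) by (apply cos_gt_0; lra).
  assert (C2 : 0 < cos p2) by (apply cos_gt_0; lra).
  set (G := Gc (cot p1) (cot p2)) in *.
  destruct (Rle_lt_or_eq_dec 0 L (proj1 hL)) as [hL0|hL0].
  2:{ subst L. unfold G. rewrite Gc0. assert (0 < avg p1 p2).
      { unfold avg. assert (0 < sin p1 * cos p1) by nra. assert (0 < sin p2 * cos p2) by nra. lra. }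
      split; lra. }
  destruct (Rle_lt_or_eq_dec L PI (proj2 hL)) as [hLP|hLP].
  2:{ subst L. unfold G. rewrite GcPI.
      assert (K1 := kpos p1 hp1). assert (K2 := kpos p2 hp2).
      assert (avg p1 p2 - (2*PI/3 - 4*(cot p1 + cot p2)/9) = (kf p1 + kf p2)/2).
      { unfold avg, kf, cot. field; repeat split; lra. }
      split; lra. }
  assert (HGd : Gd (cot p1) (cot p2) L = 0).
  { assert (pr : derivable_pt G L) by (exists (Gd (cot p1) (cot p2) L); apply Gc_deriv).
    rewrite <- (derive_pt_eq_0 G L (Gd (cot p1) (cot p2) L) pr (Gc_deriv _ _ L)).
    apply (deriv_maximum G 0 PI L pr); try lra.
    intros z h1 h2. apply Hmax. lra. }
  assert (HL2 := half_facts L (conj hL0 hLP)).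
  destruct HL2 as [sL [cL [hs hc]]].
  assert (onecos : forall z, 0 < z < PI -> 0 < 1 + cos z).
  { intros z hz. destruct (half_facts z hz) as [_ [cz [_ hcz]]].
    rewrite cz. assert (HH := sin2_cos2 (z/2)). unfold Rsqr in HH. nra. }
  assert (HW : Wf p1 p2 L = 0).
  { assert (E := GdW p1 p2 L ltac:(lra) ltac:(lra)). rewrite HGd in E.
    assert (0 < 1 + cos L) by (apply onecos; lra).
    rewrite Rmult_0_r in E. symmetry in E. apply Rmult_integral in E as [E1|E1] ; [lra| exact E1]. }

  assert (HWd : Wd p1 p2 L <= 0).
  { destruct (Rle_lt_dec (Wd p1 p2 L) 0) as [h|h]; [exact h|exfalso].
    destruct (Wf_deriv p1 p2 L (Wd p1 p2 L / 2) ltac:(lra)) as [del Hdel].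
    assert (Hdp := cond_pos del).
    set (e := Rmin del L / 2).
    assert (he : 0 < e /\ e < del /\ e < L).
    { unfold e. assert (Rmin del L <= del) by apply Rmin_l.
      assert (Rmin del L <= L) by apply Rmin_r.
      assert (0 < Rmin del L) by (apply Rmin_pos; lra). lra. }
    destruct (MVT_cor2 G (Gd (cot p1) (cot p2)) (L - e) L) as [z [Hz Hzb]]; [lra| |].
    { intros z _. apply Gc_deriv. }
    assert (Hh := Hdel (z - L) ltac:(lra) ltac:(rewrite Rabs_left; lra)).
    replace (L + (z - L)) with z in Hh by ring. rewrite HW in Hh.
    apply Rabs_def2 in Hh. destruct Hh as [_ Hh].
    assert (Wz : Wf p1 p2 z < 0).
    { assert (Wf p1 p2 z / (z - L) > 0) by lra.
      replace (Wf p1 p2 z) with (Wf p1 p2 z / (z - L) * (z - L)) by (field; lra).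
      nra. }
    assert (E := GdW p1 p2 z ltac:(lra) ltac:(lra)).
    assert (0 < 1 + cos z) by (apply onecos; lra).
    assert (Gd (cot p1) (cot p2) z < 0).
    { assert (0 < 3 * sin p1 * sin p2) by nra.
      assert ((1 + cos z) * Wf p1 p2 z < 0) by nra. nra. }
    assert (G (L - e) <= G L) by (apply Hmax; lra).
    nra. }
  set (x := p1 + p2 - L) in *.
  assert (Hsx : sin (p1 + p2) = sin L * cos x + cos L * sin x).
  { replace (p1 + p2) with (L + x) by (unfold x; ring). apply sin_plus. }
  assert (Hcx : cos (p1 + p2) = cos L * cos x - sin L * sin x).
  { replace (p1 + p2) with (L + x) by (unfold x; ring). apply cos_plus. }
  assert (HSS := sin2_cos2 (L/2)). unfold Rsqr in HSS.
  assert (hx0 : 0 <= x).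
  { destruct (Rle_lt_dec 0 x) as [h|h]; [exact h|exfalso].
    set (A := L - p1 - p2).
    assert (hA : x = - A) by (unfold x, A; ring).
    assert (0 < sin A) by (apply sin_gt_0; unfold A in *; lra).
    assert (0 < sin L) by (apply sin_gt_0; lra).
    apply (negx (sin A) (cos A) (sin L) (cos L)); auto.
    - assert (HH := sin2_cos2 A); unfold Rsqr in HH; lra.
    - assert (HH := sin2_cos2 L); unfold Rsqr in HH; lra.
    - apply cos_decreasing_1; unfold A in *; lra.
    - unfold Wd in HWd. fold x in HWd. rewrite hA, sin_neg, cos_neg in HWd. lra.
    - unfold Wf in HW. fold x in HW. rewrite hA, sin_neg, cos_neg in HW.
      assert (HH := COS_bound (p1 - p2)). lra. }
  assert (Hdiff : cos (p1 - p2) - cos (p1 + p2) = 2 * sin p1 * sin p2)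
    by (rewrite cos_minus, cos_plus; ring).
  assert (Hsum : cos (p1 - p2) + cos (p1 + p2) = 2 * cos p1 * cos p2)
    by (rewrite cos_minus, cos_plus; ring).
  assert (HW' : cos (p1 - p2) = cos x - sin L * sin x) by (unfold Wf in HW; fold x in HW; lra).
  assert (hcx : 0 < cos x).
  { assert (cos x * (1 - cos L) = 2 * sin p1 * sin p2) by (rewrite <- Hdiff, HW', Hcx; ring).
    assert (0 < 1 - cos L) by (rewrite cL; nra).
    assert (0 < 2 * sin p1 * sin p2) by nra. nra. }
  assert (hxp : x < PI/2).
  { destruct (Rlt_le_dec x (PI/2)) as [h|h]; [exact h|exfalso].
    assert (cos x <= 0) by (apply cos_le_0; unfold x in *; lra). lra. }
  assert (hsinx : 0 <= sin x) by (apply sin_ge_0; lra).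
  assert (hcons : sin (L/2) * sin x < cos (L/2) * cos x).
  { assert (E : 2 * cos (L/2) * (cos (L/2) * cos x - 2 * sin (L/2) * sin x) = 2 * cos p1 * cos p2).
    { rewrite <- Hsum, HW', Hcx, sL, cL.
      set (a := sin (L/2)) in *. set (b := cos (L/2)) in *. set (c1 := sin x). set (c2 := cos x).
      clear - HSS. nsatz. }
    assert (0 < 2 * cos p1 * cos p2) by nra.
    assert (0 < cos (L/2) * cos x - 2 * sin (L/2) * sin x) by nra.
    nra. }
  assert (E3 := I3 p1 p2 L ltac:(lra) ltac:(lra) ltac:(fold x; lra) HW).
  fold x G in E3.
  destruct (Rle_lt_or_eq_dec 0 x hx0) as [hxpos|hxz].
  - assert (Hff : 3 * x + (cos x - sin L * sin x) * sin (p1 + p2) - sin L - (1 - cos L) * (sin x / cos x)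
                  = ff (sin (L/2)) (cos (L/2)) x).
    { unfold ff. rewrite Hsx, sL, cL. field_simplify_eq; [|lra].
      set (a := sin (L/2)) in *. set (b := cos (L/2)) in *. set (c1 := sin x). set (c2 := cos x).
      simpl. clear - HSS. nsatz. }
    assert (P := ff_pos (sin (L/2)) (cos (L/2)) x ltac:(lra) hc ltac:(lra) ltac:(lra) hcons).
    split; intros; lra.
  - assert (HL : L = p1 + p2) by (unfold x in hxz; lra).
    rewrite <- hxz in E3, HW'. rewrite sin_0, cos_0 in E3, HW'.
    rewrite <- HL in E3.
    assert (Geq : G L = avg p1 p2) by lra.
    split; [lra|]. intros _. split; [|exact HL].
    apply cos_inj; try lra.
    assert (cos p1 * cos p2 + sin p1 * sin p2 = 1) by (rewrite <- cos_minus; lra).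
    assert (H1 := sin2_cos2 p1). assert (H2 := sin2_cos2 p2). unfold Rsqr in *.
    assert (Q : (cos p1 - cos p2)*(cos p1 - cos p2) + (sin p1 - sin p2)*(sin p1 - sin p2) = 0) by lra.
    assert (Q2 : (cos p1 - cos p2)*(cos p1 - cos p2) = 0).
    { assert (0 <= (cos p1 - cos p2)*(cos p1 - cos p2)) by nra.
      assert (0 <= (sin p1 - sin p2)*(sin p1 - sin p2)) by nra. lra. }
    apply Rmult_integral in Q2. destruct Q2; lra.
Qed.

Lemma tan_pos r : 0 < r < PI/2 -> 0 < tan r.
Proof.
  intros h. assert (PI2 := PI2_RGT_0). unfold tan.
  assert (0 < sin r) by (apply sin_gt_0; lra).
  assert (0 < cos r) by (apply cos_gt_0; lra).
  apply Rdiv_lt_0_compat; lra.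
Qed.

Lemma gfun_eq r l a b : 0 < tan r -> 0 < cos a -> 0 < cos b ->
  gfun r l a b = Gc (1/(tan r*cos a)) (1/(tan r*cos b)) l.
Proof.
  intros h1 h2 h3. unfold gfun, Gc. rewrite s1_eq, s2_eq. unfold s, s1c, s2c.
  field. repeat split; lra.
Qed.

Lemma param w : 0 < w -> 0 < atan w < PI/2 /\ cot (atan w) = 1 / w.
Proof.
  intros hw. destruct (atan_bound w) as [b1 b2].
  assert (hc : 0 < cos (atan w)) by (apply cos_gt_0; lra).
  assert (ht := tan_atan w). unfold tan in ht.
  assert (hs : sin (atan w) = w * cos (atan w)).
  { replace (sin (atan w)) with (sin (atan w) / cos (atan w) * cos (atan w)) at 1 by (field; lra).
    rewrite ht. reflexivity. }
  assert (0 < sin (atan w)) by (rewrite hs; nra).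
  split; [split|].
  - destruct (Rlt_le_dec 0 (atan w)) as [h|h]; [exact h|exfalso].
    assert (0 <= sin (- atan w)) by (apply sin_ge_0; lra).
    rewrite sin_neg in H0. lra.
  - lra.
  - unfold cot. rewrite hs. field. lra.
Qed.

Lemma maxexists u v : exists L, 0 <= L <= PI /\ forall z, 0 <= z <= PI -> Gc u v z <= Gc u v L.
Proof.
  destruct (continuity_ab_maj (Gc u v) 0 PI) as [L [H1 H2]].
  - assert (PI_RGT_0 := PI_RGT_0). lra.
  - intros c _. apply derivable_continuous_pt. exists (Gd u v c). apply Gc_deriv.
  - exists L. split; auto.
Qed.

Lemma h_id p : 0 < p < PI/2 -> Gc (cot p) (cot p) (2*p) = avg p p.
Proof.
  intros hp. assert (PI2 := PI2_RGT_0).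
  assert (0 < sin p) by (apply sin_gt_0; lra).
  unfold Gc, avg, s1c, cot. rewrite sin_2a, cos_2a.
  assert (HH := sin2_cos2 p). unfold Rsqr in HH.
  field_simplify_eq; [|lra].
  set (a := sin p) in *. set (b := cos p) in *. simpl. clear - HH. nsatz.
Qed.

Lemma lub_bounds (E : R -> Prop) y0 M : E y0 -> (forall y, E y -> y <= M) ->
  y0 <= real (Lub_Rbar E) <= M.
Proof.
  intros h0 hM. destruct (Lub_Rbar_correct E) as [Hub Hl].
  assert (A1 : Rbar_le y0 (Lub_Rbar E)) by (apply Hub; exact h0).
  assert (A2 : Rbar_le (Lub_Rbar E) M).
  { apply Hl. intros y hy. simpl. apply hM; exact hy. }
  destruct (Lub_Rbar E) as [l| |]; simpl in *; try contradiction. lra.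
Qed.

Theorem lemma4 (r : R) (hr : 0 < r < PI / 2) :
  (forall a : R, 0 <= a < PI / 2 ->
     let l0 := 2 * atan (tan r * cos a) in
     0 <= l0 < PI /\
     (forall l : R, 0 <= l < PI -> l <> l0 -> gfun r l a a < gfun r l0 a a)) /\
  (forall a b : R, 0 <= a < PI / 2 -> 0 <= b < PI / 2 ->
     fsup r a b <= (fsup r a a + fsup r b b) / 2 /\
     (fsup r a b = (fsup r a a + fsup r b b) / 2 -> a = b)).
Proof.
  assert (PI2 := PI2_RGT_0).
  assert (hT := tan_pos r hr).
  assert (cpos : forall a, 0 <= a < PI/2 -> 0 < cos a) by (intros a ha; apply cos_gt_0; lra).
  assert (prm : forall a, 0 <= a < PI/2 ->
     0 < atan (tan r * cos a) < PI/2 /\ cot (atan (tan r * cos a)) = 1 / (tan r * cos a)).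
  { intros a ha. apply param. assert (0 < cos a) by auto. nra. }
  assert (gE : forall a b l, 0 <= a < PI/2 -> 0 <= b < PI/2 ->
     gfun r l a b = Gc (cot (atan (tan r * cos a))) (cot (atan (tan r * cos b))) l).
  { intros a b l ha hb. rewrite gfun_eq; auto. rewrite (proj2 (prm a ha)), (proj2 (prm b hb)). reflexivity. }
  assert (diag : forall p, 0 < p < PI/2 -> forall l, 0 <= l <= PI ->
      Gc (cot p) (cot p) l <= avg p p /\ (Gc (cot p) (cot p) l = avg p p -> l = 2 * p)).
  { intros p hp l hl. destruct (maxexists (cot p) (cot p)) as [L [hL HL]].
    destruct (main_max p p L hp hp hL HL) as [m1 _].
    assert (Gc (cot p) (cot p) l <= avg p p) by (specialize (HL l hl); lra).
    split; auto. intros Heq.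
    assert (HL' : forall z, 0 <= z <= PI -> Gc (cot p) (cot p) z <= Gc (cot p) (cot p) l).
    { intros z hz. specialize (HL z hz). lra. }
    destruct (main_max p p l hp hp hl HL') as [_ m2]. destruct (m2 Heq). lra. }
  split.
  - intros a ha l0. destruct (prm a ha) as [hp _].
    set (p := atan (tan r * cos a)) in *.
    assert (Hl0 : l0 = 2 * p) by reflexivity.
    split; [lra|]. intros l hl hne.
    rewrite !gE by auto. fold p. rewrite Hl0, h_id by auto.
    destruct (diag p hp l ltac:(lra)) as [d1 d2].
    destruct (Rle_lt_or_eq_dec _ _ d1) as [h|h]; [exact h|]. exfalso. apply hne. rewrite Hl0. auto.
  - intros a b ha hb.
    destruct (prm a ha) as [hpa _]. destruct (prm b hb) as [hpb _].
    set (pa := atan (tan r * cos a)) in *. set (pb := atan (tan r * cos b)) in *.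
    assert (fdiag : forall c, 0 <= c < PI/2 -> fsup r c c = avg (atan (tan r * cos c)) (atan (tan r * cos c))).
    { intros c hc. destruct (prm c hc) as [hpc _].
      set (pc := atan (tan r * cos c)) in *.
      assert (HB := lub_bounds (fun y => exists l, 0 <= l < PI /\ y = gfun r l c c) (avg pc pc) (avg pc pc)).
      unfold fsup.
      assert (avg pc pc <= real (Lub_Rbar (fun y => exists l, 0 <= l < PI /\ y = gfun r l c c)) <= avg pc pc).
      { apply HB.
        - exists (2 * pc). split; [lra|]. rewrite gE by auto. fold pc. rewrite h_id; auto.
        - intros y [l [hl ->]]. rewrite gE by auto. fold pc. apply (diag pc hpc l). lra. }
      lra. }
    rewrite (fdiag a ha), (fdiag b hb). fold pa pb.
    destruct (maxexists (cot pa) (cot pb)) as [L [hL HL]].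
    destruct (main_max pa pb L hpa hpb hL HL) as [m1 m2].
    assert (Hab : fsup r a b <= Gc (cot pa) (cot pb) L).
    { unfold fsup.
      assert (HB := lub_bounds (fun y => exists l, 0 <= l < PI /\ y = gfun r l a b) (gfun r 0 a b) (Gc (cot pa) (cot pb) L)).
      refine (proj2 (HB _ _)).
      - exists 0. split; [lra|auto].
      - intros y [l [hl ->]]. rewrite gE by auto. fold pa pb. apply HL. lra. }
    assert (Eavg : avg pa pb = (avg pa pa + avg pb pb)/2) by (unfold avg; field).
    split; [lra|]. intros Heq.
    assert (Gc (cot pa) (cot pb) L = avg pa pb) by lra.
    destruct (m2 H) as [hpp _].
    assert (tan r * cos a = tan r * cos b).
    { rewrite <- (tan_atan (tan r * cos a)), <- (tan_atan (tan r * cos b)). fold pa pb. rewrite hpp. reflexivity. }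
    assert (cos a = cos b).
    { apply Rmult_eq_reg_l with (tan r); lra. }
    apply cos_inj; lra.
Qed.
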